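(* Let $h\colon R\to S$ be a flat morphism of commutative rings and $\mathfrak{a}\subseteq R$ an ideal. (a) If some power $\mathfrak{a}^n$ ($n\geq1$) is finitely generated, then for every $R$-module $M$ the maps $\rho^h_\mathfrak{a}(M)$ and $\overline{\rho}^h_\mathfrak{a}(M)$ coincide and are isomorphisms. (b) If $M$ is a noetherian $R$-module, then $\rho^h_\mathfrak{a}(M)=\overline{\rho}^h_\mathfrak{a}(M)$ is an isomorphism. (c) If the $R$-module $S$ is Mittag-Leffler, then $\rho^h_\mathfrak{a}(M)$ is an isomorphism for every $R$-module $M$.
   Context: $\Gamma_\mathfrak{a}(M)=\{x\in M\mid \exists n\in\mathbb{N}:\mathfrak{a}^n\subseteq(0:_Rx)\}$, $\overline{\Gamma}_\mathfrak{a}(M)=\{x\in M\mid \mathfrak{a}\subseteq\sqrt{(0:_Rx)}\}$; $\mathfrak{a}S$ is the ideal of $S$ generated by $h(\mathfrak{a})$. By flatness, $s\otimes m\mapsto s\otimes m$ gives injective $S$-linear maps $\rho^h_\mathfrak{a}(M)\colon S\otimes_R\Gamma_\mathfrak{a}(M)\to\Gamma_{\mathfrak{a}S}(S\otimes_RM)$ and $\overline{\rho}^h_\mathfrak{a}(M)\colon S\otimes_R\overline{\Gamma}_\mathfrak{a}(M)\to\overline{\Gamma}_{\mathfrak{a}S}(S\otimes_RM)$. An $R$-module $N$ is Mittag-Leffler if for every family $(N_i)_{i\in I}$ of $R$-modules the canonical map $N\otimes_R\prod_iN_i\to\prod_i(N\otimes_RN_i)$, $x\otimes(y_i)\mapsto(x\otimes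 y_i)$, is injective. *)

(* Defs.v *)
From HB Require Import structures.
From mathcomp Require Import all_boot all_order all_algebra.
From mathcomp Require Import boolp.
Set Implicit Arguments. Unset Strict Implicit. Unset Printing Implicit Defensive.
Import GRing.Theory.
Local Open Scope ring_scope.

Section DProd.
Variables (R : pzRingType) (I : Type) (N : I -> lmodType R).
Definition dprod := forall i : I, N i.
HB.instance Definition _ := Choice.on dprod.
Definition dprod_zero : dprod := fun i => 0.
Definition dprod_add (f g : dprod) : dprod := fun i => f i + g i.
Definition dprod_opp (f : dprod) : dprod := fun i => - f i.
Definition dprod_scale (r : R) (f : dprod) : dprod := fun i => r *: f i.
Let addA : associative dprod_add.
Proof. by move=> f g k; apply: functional_extensionality_dep => i; rewrite /dprod_add addrA. Qed.
Let addC : commutative dprod_add.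
Proof. by move=> f g; apply: functional_extensionality_dep => i; rewrite /dprod_add addrC. Qed.
Let add0 : left_id dprod_zero dprod_add.
Proof. by move=> f; apply: functional_extensionality_dep => i; rewrite /dprod_add add0r. Qed.
HB.instance Definition _ := GRing.isNmodule.Build dprod addA addC add0.
Let addN : left_inverse dprod_zero dprod_opp dprod_add.
Proof. by move=> f; apply: functional_extensionality_dep => i; rewrite /dprod_add addNr. Qed.
HB.instance Definition _ := GRing.Nmodule_isZmodule.Build dprod addN.
Let scA a b f : dprod_scale a (dprod_scale b f) = dprod_scale (a * b) f.
Proof. by apply: functional_extensionality_dep => i; rewrite /dprod_scale scalerA. Qed.
Let sc1 : left_id 1 dprod_scale.
Proof. by move=> f; apply: functional_extensionality_dep => i; rewrite /dprod_scale scale1r. Qed.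
Let scDr : right_distributive dprod_scale dprod_add.
Proof. by move=> a f g; apply: functional_extensionality_dep => i; rewrite /dprod_scale /dprod_add scalerDr. Qed.
Let scDl f : {morph dprod_scale^~ f : a b / a + b >-> dprod_add a b}.
Proof. by move=> a b; apply: functional_extensionality_dep => i; rewrite /dprod_scale /dprod_add scalerDl. Qed.
HB.instance Definition _ := GRing.Zmodule_isLmodule.Build R dprod scA sc1 scDr scDl.
End DProd.

Definition is_ideal (A : comPzRingType) (J : A -> Prop) : Prop :=
  [/\ J 0, (forall x y, J x -> J y -> J (x + y)) & (forall r x, J x -> J (r * x))].

Definition gen_ideal (A : comPzRingType) (X : A -> Prop) : A -> Prop :=
  fun a => exists k (c g : 'I_k -> A),
      (forall i, X (g i)) /\ a = \sum_(i < k) c i * g i.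

Definition ideal_pow (A : comPzRingType) (J : A -> Prop) (n : nat) : A -> Prop :=
  gen_ideal (fun a => exists f : 'I_n -> A,
                 (forall j, J (f j)) /\ a = \prod_(j < n) f j).

Definition ext_ideal (A B : comPzRingType) (h : A -> B) (J : A -> Prop) : B -> Prop :=
  gen_ideal (fun b => exists a, J a /\ b = h a).

Definition fg_ideal (A : comPzRingType) (J : A -> Prop) : Prop :=
  exists k (g : 'I_k -> A),
    forall a, J a <-> gen_ideal (fun x => exists i, x = g i) a.

Definition Gamma (A : comPzRingType) (M : lmodType A) (J : A -> Prop) (x : M) : Prop :=
  exists n : nat, forall r, ideal_pow J n r -> r *: x = 0.

Definition Gammabar (A : comPzRingType) (M : lmodType A) (J : A -> Prop) (x : M) : Prop :=
  forall r, J r -> exists k : nat, r ^+ k *: x = 0.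

Definition submodule (A : comPzRingType) (M : lmodType A) (N : M -> Prop) : Prop :=
  [/\ N 0, (forall x y, N x -> N y -> N (x + y)) & (forall r x, N x -> N (r *: x))].

Definition fg_submodule (A : comPzRingType) (M : lmodType A) (N : M -> Prop) : Prop :=
  exists k (g : 'I_k -> M), (forall i, N (g i)) /\
    forall x, N x -> exists c : 'I_k -> A, x = \sum_(i < k) c i *: g i.

Definition noetherian_module (A : comPzRingType) (M : lmodType A) : Prop :=
  forall N : M -> Prop, submodule N -> fg_submodule N.

(* Base change  S (x)_R P  for a submodule P of an R-module M, given  *)
(* by its universal property (as an S-module, S acting on the left).  *)

Section Tensor.
Variables (R S : comPzRingType) (h : {rmorphism R -> S}).

Definition balanced (M : lmodType R) (P : M -> Prop) (V : lmodType S)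
    (phi : S -> M -> V) : Prop :=
  [/\ (forall m, P m -> forall c s s', phi (c * s + s') m = c *: phi s m + phi s' m),
      (forall s m m', P m -> P m' -> phi s (m + m') = phi s m + phi s m')
    & (forall s r m, P m -> phi (h r * s) m = phi s (r *: m))].

(* (T, b) is a tensor product  S (x)_R P, with b s m = s (x) m *)
Definition is_tensor (M : lmodType R) (P : M -> Prop) (T : lmodType S)
    (b : S -> M -> T) : Prop :=
  balanced P b /\
  forall (V : lmodType S) (phi : S -> M -> V), balanced P phi ->
    (exists psi : {linear T -> V}, forall s m, P m -> psi (b s m) = phi s m) /\
    (forall psi1 psi2 : {linear T -> V},
        (forall s m, P m -> psi1 (b s m) = psi2 (b s m)) -> forall t, psi1 t = psi2 t).

Definition TT (M : lmodType R) : M -> Prop := fun _ => True.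

Definition flat : Prop :=
  forall (N N' : lmodType R) (f : {linear N -> N'}), injective f ->
  forall (T : lmodType S) (b : S -> N -> T) (T' : lmodType S) (b' : S -> N' -> T'),
    is_tensor (@TT N) b -> is_tensor (@TT N') b' ->
  forall g : {linear T -> T'}, (forall s n, g (b s n) = b' s (f n)) ->
    injective g.

Definition mittag_leffler : Prop :=
  forall (I : Type) (N : I -> lmodType R)
    (T : lmodType S) (b : S -> dprod N -> T)
    (Ti : I -> lmodType S) (bi : forall i, S -> N i -> Ti i)
    (g : forall i, {linear T -> Ti i}),
    is_tensor (@TT (dprod N)) b ->
    (forall i, is_tensor (@TT (N i)) (bi i)) ->
    (forall i s x, g i (b s x) = bi i s (x i)) ->
    injective (fun u : T => (fun i => g i u) : dprod Ti).

Definition is_rho (M : lmodType R) (P : M -> Prop) (T0 : lmodType S)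
    (b0 : S -> M -> T0) (T : lmodType S) (b : S -> M -> T) (rho : T0 -> T) : Prop :=
  forall s m, P m -> rho (b0 s m) = b s m.

End Tensor.

Definition iso_onto (A : comPzRingType) (U V : lmodType A) (f : U -> V) (Q : V -> Prop) : Prop :=
  injective f /\ forall v, Q v <-> exists u, f u = v.

(* Main.v *)
Require Import Defs.
From HB Require Import structures.
From mathcomp Require Import all_boot all_order all_algebra.
From mathcomp Require Import boolp generic_quotient.
Set Implicit Arguments. Unset Strict Implicit. Unset Printing Implicit Defensive.
Import GRing.Theory.
Local Open Scope ring_scope.

Local Open Scope quotient_scope.
Local Open Scope ring_scope.

Section L.
Variables (S : pzRingType) (U V : lmodType S) (f : U -> V) (Hf : linear f).
Definition lf := f.
HB.instance Definition _ := GRing.isLinear.Build S U V *:%R lf Hf.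
Definition mkLin : {linear U -> V} := lf.
Lemma mkLinE x : mkLin x = f x. Proof. by []. Qed.
End L.
Arguments mkLin {S U V f}.
Arguments mkLinE {S U V f}.

Section Quot.
Variables (A : pzRingType) (X : choiceType) (e : X -> X -> Prop).
Variables (z : X) (ad : X -> X -> X) (op : X -> X) (sc : A -> X -> X).
Hypothesis e_refl : forall x, e x x.
Hypothesis e_sym : forall x y, e x y -> e y x.
Hypothesis e_trans : forall x y w, e x y -> e y w -> e x w.
Hypothesis ad_c : forall x x' y y', e x x' -> e y y' -> e (ad x y) (ad x' y').
Hypothesis op_c : forall x x', e x x' -> e (op x) (op x').
Hypothesis sc_c : forall c x x', e x x' -> e (sc c x) (sc c x').
Hypothesis adA : forall x y w, e (ad x (ad y w)) (ad (ad x y) w).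
Hypothesis adC : forall x y, e (ad x y) (ad y x).
Hypothesis ad0 : forall x, e (ad z x) x.
Hypothesis adN : forall x, e (ad (op x) x) z.
Hypothesis scA : forall a b x, e (sc a (sc b x)) (sc (a * b) x).
Hypothesis sc1 : forall x, e (sc 1 x) x.
Hypothesis scDr : forall a x y, e (sc a (ad x y)) (ad (sc a x) (sc a y)).
Hypothesis scDl : forall a b x, e (sc (a + b) x) (ad (sc a x) (sc b x)).

Definition er : rel X := fun x y => `[< e x y >].
Lemma er_refl : reflexive er. Proof. by move=> x; apply/asboolP. Qed.
Lemma er_sym : symmetric er.
Proof. by move=> x y; apply/asboolP/asboolP; apply: e_sym. Qed.
Lemma er_trans : transitive er.
Proof. by move=> y x w /asboolP H1 /asboolP H2; apply/asboolP; apply: e_trans H1 H2. Qed.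
Canonical er_equiv := EquivRel er er_refl er_sym er_trans.
Definition QT := {eq_quot er}.
HB.instance Definition _ := Choice.on QT.
Definition qpi (x : X) : QT := \pi_QT x.
Lemma qpiE x y : qpi x = qpi y <-> e x y.
Proof. by split => [/eqmodP /asboolP|H]; [|apply/eqmodP/asboolP]. Qed.
Lemma qpi_surj (q : QT) : exists x, q = qpi x.
Proof. by exists (repr q); rewrite /qpi reprK. Qed.
Lemma repr_e x : e (repr (qpi x)) x.
Proof. by apply/qpiE; rewrite /qpi reprK. Qed.

Definition qz : QT := qpi z.
Definition qadd (p q : QT) : QT := qpi (ad (repr p) (repr q)).
Definition qopp (p : QT) : QT := qpi (op (repr p)).
Definition qsc (c : A) (p : QT) : QT := qpi (sc c (repr p)).
Lemma qaddE x y : qadd (qpi x) (qpi y) = qpi (ad x y).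
Proof. by apply/qpiE; apply: ad_c; apply: repr_e. Qed.
Lemma qoppE x : qopp (qpi x) = qpi (op x).
Proof. by apply/qpiE; apply: op_c; apply: repr_e. Qed.
Lemma qscE c x : qsc c (qpi x) = qpi (sc c x).
Proof. by apply/qpiE; apply: sc_c; apply: repr_e. Qed.

Lemma qaddA : associative qadd.
Proof.
move=> p q r; case: (qpi_surj p) => x ->; case: (qpi_surj q) => y ->;
case: (qpi_surj r) => w ->; rewrite !qaddE; apply/qpiE; exact: adA.
Qed.
Lemma qaddC : commutative qadd.
Proof.
move=> p q; case: (qpi_surj p) => x ->; case: (qpi_surj q) => y ->;
rewrite !qaddE; apply/qpiE; exact: adC.
Qed.
Lemma qadd0 : left_id qz qadd.
Proof. move=> p; case: (qpi_surj p) => x ->; rewrite qaddE; apply/qpiE; exact: ad0. Qed.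
HB.instance Definition _ := GRing.isNmodule.Build QT qaddA qaddC qadd0.
Lemma qaddN : left_inverse qz qopp qadd.
Proof. move=> p; case: (qpi_surj p) => x ->; rewrite qoppE qaddE; apply/qpiE; exact: adN. Qed.
HB.instance Definition _ := GRing.Nmodule_isZmodule.Build QT qaddN.
Lemma qscA a b p : qsc a (qsc b p) = qsc (a * b) p.
Proof. case: (qpi_surj p) => x ->; rewrite !qscE; apply/qpiE; exact: scA. Qed.
Lemma qsc1 : left_id 1 qsc.
Proof. move=> p; case: (qpi_surj p) => x ->; rewrite !qscE; apply/qpiE; exact: sc1. Qed.
Lemma qscDr : right_distributive qsc qadd.
Proof.
move=> a p q; case: (qpi_surj p) => x ->; case: (qpi_surj q) => y ->.
by rewrite qaddE !qscE qaddE; apply/qpiE; apply: scDr.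
Qed.
Lemma qscDl p : {morph qsc^~ p : a b / a + b >-> qadd a b}.
Proof.
move=> a b; case: (qpi_surj p) => x ->.
by rewrite !qscE qaddE; apply/qpiE; apply: scDl.
Qed.
HB.instance Definition _ := GRing.Zmodule_isLmodule.Build A QT qscA qsc1 qscDr qscDl.
Definition QL : lmodType A := QT.
Lemma qpi_add x y : qpi (ad x y) = (qpi x : QL) + qpi y.
Proof. by rewrite -qaddE. Qed.
Lemma qpi_sc c x : qpi (sc c x) = c *: (qpi x : QL).
Proof. by rewrite -qscE. Qed.
Lemma qpi_zero : qpi z = 0 :> QL. Proof. by []. Qed.
End Quot.

Section SubQuot.
Variables (A : comPzRingType) (M : lmodType A) (P W : M -> Prop).
Hypotheses (hP : submodule P) (hW : submodule W).

Definition SX := {m : M | `[< P m >]}.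
Lemma P0 : P 0. Proof. by case: hP. Qed.
Lemma PD x y : P x -> P y -> P (x + y). Proof. by case: hP => _ H _; apply: H. Qed.
Lemma PZ c x : P x -> P (c *: x). Proof. by case: hP => _ _ H; apply: H. Qed.
Lemma W0 : W 0. Proof. by case: hW. Qed.
Lemma WD x y : W x -> W y -> W (x + y). Proof. by case: hW => _ H _; apply: H. Qed.
Lemma WZ c x : W x -> W (c *: x). Proof. by case: hW => _ _ H; apply: H. Qed.
Lemma WN x : W x -> W (- x). Proof. by move=> H; rewrite -scaleN1r; apply: WZ. Qed.
Lemma WB x y : W x -> W y -> W (x - y). Proof. by move=> *; apply: WD => //; apply: WN. Qed.

Definition smk (m : M) (H : P m) : SX := exist _ m (introT (asboolP _) H).
Lemma sP (x : SX) : P (val x). Proof. by case: x => m /= /asboolP. Qed.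
Definition sz : SX := smk P0.
Definition sad (x y : SX) : SX := smk (PD (sP x) (sP y)).
Definition sop (x : SX) : SX := smk (PZ (-1) (sP x)).
Definition ssc (c : A) (x : SX) : SX := smk (PZ c (sP x)).
Definition se (x y : SX) : Prop := W (val x - val y).
Lemma se_val x y : val x = val y -> se x y.
Proof. by rewrite /se => ->; rewrite subrr; apply: W0. Qed.
Lemma se_refl x : se x x. Proof. exact: se_val. Qed.
Lemma se_sym x y : se x y -> se y x.
Proof. by rewrite /se => H; rewrite -opprB; apply: WN. Qed.
Lemma se_trans x y w : se x y -> se y w -> se x w.
Proof. by rewrite /se => H1 H2; have := WD H1 H2; rewrite addrA subrK. Qed.
Lemma sad_c x x' y y' : se x x' -> se y y' -> se (sad x y) (sad x' y').
Proof.
rewrite /se /= => H1 H2; have := WD H1 H2.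
by rewrite opprD addrACA.
Qed.
Lemma sop_c x x' : se x x' -> se (sop x) (sop x').
Proof. by rewrite /se /= => H; rewrite -scalerBr; apply: WZ. Qed.
Lemma ssc_c c x x' : se x x' -> se (ssc c x) (ssc c x').
Proof. by rewrite /se /= => H; rewrite -scalerBr; apply: WZ. Qed.
Lemma sadA x y w : se (sad x (sad y w)) (sad (sad x y) w).
Proof. by apply: se_val; rewrite /= addrA. Qed.
Lemma sadC x y : se (sad x y) (sad y x).
Proof. by apply: se_val; rewrite /= addrC. Qed.
Lemma sad0 x : se (sad sz x) x.
Proof. by apply: se_val; rewrite /= add0r. Qed.
Lemma sadN x : se (sad (sop x) x) sz.
Proof. by apply: se_val; rewrite /= scaleN1r addNr. Qed.
Lemma sscA a b x : se (ssc a (ssc b x)) (ssc (a * b) x).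
Proof. by apply: se_val; rewrite /= scalerA. Qed.
Lemma ssc1 x : se (ssc 1 x) x.
Proof. by apply: se_val; rewrite /= scale1r. Qed.
Lemma sscDr a x y : se (ssc a (sad x y)) (sad (ssc a x) (ssc a y)).
Proof. by apply: se_val; rewrite /= scalerDr. Qed.
Lemma sscDl a b x : se (ssc (a + b) x) (sad (ssc a x) (ssc b x)).
Proof. by apply: se_val; rewrite /= scalerDl. Qed.

Definition SQ : lmodType A := @QL _ _ _ _ _ _ _ se_refl se_sym se_trans sad_c sop_c ssc_c sadA sadC sad0 sadN
  sscA ssc1 sscDr sscDl.
Definition spi (x : SX) : SQ := @qpi _ _ se_refl se_sym se_trans x.
Lemma spiE x y : spi x = spi y <-> se x y. Proof. exact: qpiE. Qed.
Lemma spi_surj (q : SQ) : exists x, q = spi x. Proof. exact: qpi_surj. Qed.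
Lemma spi_add x y : spi (sad x y) = spi x + spi y. Proof. exact: qpi_add. Qed.
Lemma spi_sc c x : spi (ssc c x) = c *: spi x. Proof. exact: qpi_sc. Qed.

Definition proj (m : M) : SQ := spi (insubd sz m).
Lemma insubdP m (H : P m) : val (insubd sz m) = m.
Proof. by rewrite insubdK //=; apply/asboolP. Qed.
Lemma projE m (H : P m) : proj m = spi (smk H).
Proof. by apply/spiE/se_val; rewrite insubdP. Qed.
Lemma proj_eq m m' : P m -> P m' -> (proj m = proj m' <-> W (m - m')).
Proof. by move=> H H'; rewrite (projE H) (projE H'); split => [/spiE|?]; [|apply/spiE]. Qed.
Lemma projD m m' : P m -> P m' -> proj (m + m') = proj m + proj m'.
Proof.
move=> H H'; rewrite (projE H) (projE H') (projE (PD H H')) -spi_add.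
by apply/spiE/se_val.
Qed.
Lemma projZ c m : P m -> proj (c *: m) = c *: proj m.
Proof.
move=> H; rewrite (projE H) (projE (PZ c H)) -spi_sc.
by apply/spiE/se_val.
Qed.
Lemma proj0 : proj 0 = 0.
Proof. by rewrite -(scale0r 0) projZ ?scale0r //; apply: P0. Qed.
Lemma proj_zero m : P m -> (proj m = 0 <-> W m).
Proof. by move=> H; rewrite -proj0 proj_eq ?subr0 //; apply: P0. Qed.
Definition iota (q : SQ) : M := val (repr q).
Lemma iotaP q : P (iota q). Proof. exact: sP. Qed.
Lemma projK q : proj (iota q) = q.
Proof.
case: (spi_surj q) => x ->; rewrite (projE (iotaP _)); apply/spiE.
exact: (@repr_e _ _ se_refl se_sym se_trans x).
Qed.
Lemma iota_proj m : P m -> W (iota (proj m) - m).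
Proof. by move=> H; apply/proj_eq => //; [apply: iotaP|rewrite projK]. Qed.
Lemma proj_surj q : exists2 m, P m & q = proj m.
Proof. by exists (iota q); [apply: iotaP|rewrite projK]. Qed.
End SubQuot.

Lemma TT_sub (A : comPzRingType) (M : lmodType A) : submodule (@TT A M).
Proof. by []. Qed.

Section Tens.
Variables (R S : comPzRingType) (h : {rmorphism R -> S}).

Section Bal.
Variables (M : lmodType R) (P : M -> Prop) (V : lmodType S) (phi : S -> M -> V).
Hypothesis (hb : balanced h P phi).
Lemma bal1 m : P m -> forall c s s', phi (c * s + s') m = c *: phi s m + phi s' m.
Proof. by case: hb => H _ _; apply: H. Qed.
Lemma bal2 s m m' : P m -> P m' -> phi s (m + m') = phi s m + phi s m'.
Proof. by case: hb => _ H _; apply: H. Qed.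
Lemma bal3 s r m : P m -> phi (h r * s) m = phi s (r *: m).
Proof. by case: hb => _ _ H; apply: H. Qed.
Lemma bal_s0 m : P m -> phi 0 m = 0.
Proof.
move=> Pm; have := bal1 Pm 1 0 0; rewrite mul1r addr0 scale1r => /esym /eqP.
by rewrite -subr_eq0 addrK => /eqP.
Qed.
Lemma balZ m c s : P m -> phi (c * s) m = c *: phi s m.
Proof. by move=> Pm; rewrite -[c * s]addr0 bal1 // bal_s0 // addr0. Qed.
Lemma balD m s s' : P m -> phi (s + s') m = phi s m + phi s' m.
Proof. by move=> Pm; rewrite -{1}[s]mul1r bal1 // scale1r. Qed.
Lemma bal_m0 s : P 0 -> phi s 0 = 0.
Proof.
move=> P0; have := bal2 s P0 P0; rewrite addr0 => /esym /eqP.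
by rewrite -subr_eq0 addrK => /eqP.
Qed.
End Bal.

Section TensLemmas.
Variables (M : lmodType R) (P : M -> Prop) (T : lmodType S) (b : S -> M -> T).
Hypothesis (hT : is_tensor h P b).
Lemma tbal : balanced h P b. Proof. by case: hT. Qed.
Lemma tens_ex (V : lmodType S) (phi : S -> M -> V) : balanced h P phi ->
  exists psi : {linear T -> V}, forall s m, P m -> psi (b s m) = phi s m.
Proof. by case: hT => _ H Hb; case: (H V phi Hb). Qed.
Lemma tens_uniq (V : lmodType S) (psi1 psi2 : {linear T -> V}) :
  (forall s m, P m -> psi1 (b s m) = psi2 (b s m)) -> forall t, psi1 t = psi2 t.
Proof.
case: hT => Hb H E.
have Hb' : balanced h P (fun s m => psi1 (b s m)).
  split.
  - by move=> m Pm c s s'; rewrite (bal1 Hb) // linearD linearZ.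
  - by move=> s m m' Pm Pm'; rewrite (bal2 Hb) // linearD.
  - by move=> s r m Pm; rewrite (bal3 Hb).
by have [_ U] := H V _ Hb'; apply: U.
Qed.

End TensLemmas.
Section SpanS.
Variables (M : lmodType R) (P : M -> Prop) (T : lmodType S) (b : S -> M -> T).
Hypothesis (hb : balanced h P b).
Definition Span (t : T) : Prop :=
  exists l : seq (S * M), (forall p, p \in l -> P p.2) /\ t = \sum_(p <- l) b p.1 p.2.
Lemma Span_sub : submodule Span.
Proof.
split.
- by exists [::]; split => //; rewrite big_nil.
- move=> x y [l1 [H1 ->]] [l2 [H2 ->]]; exists (l1 ++ l2); split; last by rewrite big_cat.
  by move=> p; rewrite mem_cat => /orP [/H1|/H2].
- move=> r x [l [H ->]]; exists [seq (r * p.1, p.2) | p <- l]; split.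
    by move=> p /mapP [q /H Hq ->].
  rewrite big_map scaler_sumr; apply: eq_big_seq => p /H Hp /=.
  by rewrite (balZ hb).
Qed.
Lemma Span1 s m : P m -> Span (b s m).
Proof. by move=> Pm; exists [:: (s, m)]; split; [move=> p; rewrite inE => /eqP ->|rewrite big_seq1]. Qed.
End SpanS.
Lemma bal_weaken (M : lmodType R) (P : M -> Prop) (V : lmodType S) (phi : S -> M -> V) :
  balanced h (@TT R M) phi -> balanced h P phi.
Proof. by case=> H1 H2 H3; split => *; [apply: H1|apply: H2|apply: H3]. Qed.
Lemma balN (M : lmodType R) (V : lmodType S) (phi : S -> M -> V) :
  balanced h (@TT R M) phi -> forall s m, phi s (- m) = - phi s m.
Proof.
move=> Hb s m; rewrite -scaleN1r -(bal3 Hb) // rmorphN1 mulN1r.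
by rewrite -mulN1r (balZ Hb) // scaleN1r.
Qed.
Lemma balB (M : lmodType R) (V : lmodType S) (phi : S -> M -> V) :
  balanced h (@TT R M) phi -> forall s m m', phi s (m - m') = phi s m - phi s m'.
Proof. by move=> Hb s m m'; rewrite (bal2 Hb) // (balN Hb). Qed.
End Tens.

Section QuotMap.
Variables (A : comPzRingType) (T : lmodType A) (W : T -> Prop) (hW : submodule W).
Definition QM : lmodType A := SQ (TT_sub T) hW.
Definition qproj (t : T) : QM := proj (TT_sub T) hW t.
Lemma qproj_lin : linear qproj.
Proof. by move=> c x y; rewrite /qproj projD // projZ. Qed.
Definition qprojL : {linear T -> QM} := mkLin qproj_lin.
Lemma qprojLE t : qprojL t = qproj t. Proof. by []. Qed.
Lemma qproj0 t : qproj t = 0 <-> W t.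
Proof. exact: proj_zero. Qed.
Lemma qproj_eq t t' : qproj t = qproj t' <-> W (t - t').
Proof. exact: proj_eq. Qed.
Lemma qproj_surj q : exists t, q = qproj t.
Proof. by case: (proj_surj q) => t _ ->; exists t. Qed.
Definition qlift (q : QM) : T := iota (q : SQ (TT_sub T) hW).
Lemma qliftK q : qproj (qlift q) = q. Proof. exact: projK. Qed.
Lemma qlift_proj t : W (qlift (qproj t) - t). Proof. exact: iota_proj. Qed.
Lemma quot_univ (V : lmodType A) (f : {linear T -> V}) : (forall t, W t -> f t = 0) ->
  exists g : {linear QM -> V}, forall t, g (qproj t) = f t.
Proof.
move=> Hf.
have E : forall t t', qproj t = qproj t' -> f t = f t'.
  by move=> t t' /qproj_eq /Hf; rewrite linearB => /eqP; rewrite subr_eq0 => /eqP.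
pose g (q : QM) := f (iota q).
have gE : forall t, g (qproj t) = f t by move=> t; apply: E; rewrite /qproj projK.
have gl : linear g.
  move=> c q q'; case: (qproj_surj q) => t ->; case: (qproj_surj q') => t' ->.
  by rewrite -!qprojLE -linearP !qprojLE !gE linearP.
by exists (mkLin gl) => t; rewrite mkLinE gE.
Qed.
End QuotMap.

Section Spanning.
Variables (R S : comPzRingType) (h : {rmorphism R -> S}).
Variables (M : lmodType R) (P : M -> Prop) (T : lmodType S) (b : S -> M -> T).
Hypothesis (hT : is_tensor h P b).
Lemma spanning t : Span P b t.
Proof.
have hW := Span_sub (tbal hT).
have zl : linear (fun _ : T => 0 : QM hW) by move=> c x y; rewrite scaler0 addr0.
have := tens_uniq hT (psi1 := qprojL hW) (psi2 := mkLin zl).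
move=> /(_ _ t); rewrite mkLinE qprojLE => E; apply/(qproj0 hW); apply: E.
move=> s m Pm; rewrite mkLinE qprojLE; apply/(qproj0 hW); exact: Span1.
Qed.
End Spanning.

Lemma split_l m n (i : 'I_m) : split (lshift n i) = inl i.
Proof. exact: (unsplitK (inl i)). Qed.
Lemma split_r m n (i : 'I_n) : split (rshift m i) = inr i.
Proof. exact: (unsplitK (inr i)). Qed.

Section Ideals.
Variable (A : comPzRingType).
Implicit Types (X J : A -> Prop).

Lemma gen1 X y : X y -> gen_ideal X y.
Proof. by move=> H; exists 1%N, (fun _ => 1), (fun _ => y); rewrite big_ord1 mul1r. Qed.

Lemma gen0 X : gen_ideal X 0.
Proof. by exists 0%N, (fun _ => 0), (fun _ => 0); split => [[]//|]; rewrite big_ord0. Qed.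

Lemma genD X x y : gen_ideal X x -> gen_ideal X y -> gen_ideal X (x + y).
Proof.
move=> [k1 [c1 [g1 [H1 ->]]]] [k2 [c2 [g2 [H2 ->]]]].
exists (k1 + k2)%N, (fun i => match split i with inl i1 => c1 i1 | inr i2 => c2 i2 end),
  (fun i => match split i with inl i1 => g1 i1 | inr i2 => g2 i2 end).
split; first by move=> i; case: (split i).
by rewrite big_split_ord /=; congr (_ + _); apply: eq_bigr => i _;
  rewrite ?split_l ?split_r.
Qed.

Lemma genM X r x : gen_ideal X x -> gen_ideal X (r * x).
Proof.
move=> [k [c [g [H ->]]]]; exists k, (fun i => r * c i), g; split => //.
by rewrite mulr_sumr; apply: eq_bigr => i _; rewrite mulrA.
Qed.

Lemma gen_ideal_is X : is_ideal (gen_ideal X).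
Proof. by split; [apply: gen0|apply: genD|apply: genM]. Qed.

Lemma gen_min X J : is_ideal J -> (forall y, X y -> J y) -> forall r, gen_ideal X r -> J r.
Proof.
move=> [J0 JD JM] HX r [k [c [g [H ->]]]].
apply: (big_ind J); [exact: J0|exact: JD|].
by move=> i _; apply: JM; apply: HX.
Qed.

Lemma ideal_sum J (I : Type) (s : seq I) (F : I -> A) : is_ideal J ->
  (forall i, J (F i)) -> J (\sum_(i <- s) F i).
Proof. by move=> [J0 JD JM] HF; apply: (big_ind J); [exact: J0|exact: JD|]. Qed.

Lemma gen_kill (M : lmodType A) X (x : M) : (forall y, X y -> y *: x = 0) ->
  forall r, gen_ideal X r -> r *: x = 0.
Proof.
move=> HX r [k [c [g [H ->]]]]; rewrite scaler_suml big1 // => i _.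
by rewrite -scalerA HX ?scaler0.
Qed.

Lemma pow_gen J n (f : 'I_n -> A) : (forall j, J (f j)) -> ideal_pow J n (\prod_(j < n) f j).
Proof. by move=> H; apply: gen1; exists f. Qed.

Lemma pow0 J : ideal_pow J 0 1.
Proof. by have := @pow_gen J 0 (fun _ => 0); rewrite big_ord0; apply => -[]. Qed.

Lemma pow_addl J N d r : ideal_pow J (N + d) r -> ideal_pow J N r.
Proof.
move=> [k [c [g [H ->]]]].
have [f Hf] : exists f : 'I_k -> 'I_(N + d) -> A, forall i, (forall j, J (f i j)) /\ g i = \prod_j f i j.
  by apply: (fin_all_exists (P := fun i f => (forall j, J (f j)) /\ g i = \prod_j f j)).
exists k, (fun i => c i * \prod_(j < d) f i (rshift N j)), (fun i => \prod_(j < N) f i (lshift d j)).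
split; first by move=> i; exists (fun j => f i (lshift d j)); split => // j; case: (Hf i).
apply: eq_bigr => i _; case: (Hf i) => _ ->; rewrite big_split_ord /=.
by rewrite -mulrA [X in _ * X]mulrC.
Qed.

Lemma pow_mono J N N' r : (N <= N')%N -> ideal_pow J N' r -> ideal_pow J N r.
Proof. by move=> le; rewrite -(subnKC le); apply: pow_addl. Qed.

Lemma pow_sub J n r : is_ideal J -> (0 < n)%N -> ideal_pow J n r -> J r.
Proof.
move=> hJ n0; apply: gen_min => // y [f [Hf ->]].
case: n n0 f Hf => // n _ f Hf; rewrite big_ord_recl.
by case: hJ => _ _ JM; rewrite mulrC; apply: JM.
Qed.

Lemma pow_mulS J N al r : J al -> ideal_pow J N r -> ideal_pow J N.+1 (al * r).
Proof.
move=> Hal [k [c [g [H ->]]]].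
have [f Hf] : exists f : 'I_k -> 'I_N -> A, forall i, (forall j, J (f i j)) /\ g i = \prod_j f i j.
  by apply: (fin_all_exists (P := fun i f => (forall j, J (f j)) /\ g i = \prod_j f j)).
exists k, c, (fun i => al * g i); split; last first.
  by rewrite mulr_sumr; apply: eq_bigr => i _; rewrite mulrCA.
move=> i; exists (fun j : 'I_N.+1 => if unlift ord0 j is Some j' then f i j' else al); split.
  by move=> j; case: (unlift _ _) => //; case: (Hf i).
rewrite big_ord_recl /= unlift_none; congr (_ * _); case: (Hf i) => _ ->.
by apply: eq_bigr => j _; rewrite liftK.
Qed.

Lemma pow_exp J r N : J r -> ideal_pow J N (r ^+ N).
Proof.
move=> Hr; have := @pow_gen J N (fun _ => r) (fun _ => Hr).
by rewrite prodr_const card_ord.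
Qed.

End Ideals.

Section Gam.
Variables (A : comPzRingType) (M : lmodType A) (a : A -> Prop).

Lemma Gamma_sub : submodule (@Gamma A M a).
Proof.
split.
- by exists 0%N => r _; rewrite scaler0.
- move=> x y [N1 H1] [N2 H2]; exists (N1 + N2)%N => r Hr; rewrite scalerDr.
  rewrite H1 ?H2 ?addr0 //; last by apply: pow_addl Hr.
  by rewrite addnC in Hr; apply: pow_addl Hr.
- by move=> c x [N H]; exists N => r Hr; rewrite scalerA mulrC -scalerA H // scaler0.
Qed.

Lemma Gammabar_sub : submodule (@Gammabar A M a).
Proof.
split.
- by move=> r _; exists 0%N; rewrite scaler0.
- move=> x y H1 H2 r Hr; case: (H1 r Hr) => k1 E1; case: (H2 r Hr) => k2 E2.
  exists (k1 + k2)%N; rewrite scalerDr exprD -!scalerA E2 scaler0 addr0.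
  by rewrite scalerA mulrC -scalerA E1 scaler0.
- move=> c x H r Hr; case: (H r Hr) => k E; exists k.
  by rewrite scalerA mulrC -scalerA E scaler0.
Qed.

Lemma Gamma_bar (x : M) : Gamma a x -> Gammabar a x.
Proof. by move=> [N H] r Hr; exists N; apply: H; apply: pow_exp. Qed.

End Gam.

Lemma zero_sub (A : comPzRingType) (M : lmodType A) : submodule (fun m : M => m = 0).
Proof.
split => //; first by move=> x y -> ->; rewrite addr0.
by move=> r x ->; rewrite scaler0.
Qed.

Section SubMod.
Variables (A : comPzRingType) (M : lmodType A) (P : M -> Prop) (hP : submodule P).
Definition SM : lmodType A := SQ hP (zero_sub M).
Definition sproj (m : M) : SM := proj hP (zero_sub M) m.
Definition sinc (q : SM) : M := iota q.
Lemma sincP q : P (sinc q). Proof. exact: iotaP. Qed.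
Lemma sprojK q : sproj (sinc q) = q. Proof. exact: projK. Qed.
Lemma sincK m : P m -> sinc (sproj m) = m.
Proof. by move=> Pm; apply/eqP; rewrite -subr_eq0; apply/eqP; exact: (iota_proj hP (zero_sub M) Pm). Qed.
Lemma sproj_inj m m' : P m -> P m' -> sproj m = sproj m' -> m = m'.
Proof. by move=> H H' E; rewrite -(sincK H) -(sincK H') E. Qed.
Lemma sinc_inj : injective sinc.
Proof. by move=> q q' E; rewrite -(sprojK q) -(sprojK q') E. Qed.
Lemma sprojD m m' : P m -> P m' -> sproj (m + m') = sproj m + sproj m'.
Proof. exact: projD. Qed.
Lemma sprojZ c m : P m -> sproj (c *: m) = c *: sproj m.
Proof. exact: projZ. Qed.
Lemma sinc_lin : linear sinc.
Proof.
move=> c q q'.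
have PD : forall x y, P x -> P y -> P (x + y) by case: hP.
have PZ : forall c x, P x -> P (c *: x) by case: hP.
apply: (sproj_inj (sincP _)); first by apply: PD; [apply: PZ|]; apply: sincP.
by rewrite sprojK sprojD ?sprojZ ?sprojK //; try apply: PZ; apply: sincP.
Qed.
Definition sincL : {linear SM -> M} := mkLin sinc_lin.
End SubMod.

Section SubTens.
Variables (R S : comPzRingType) (h : {rmorphism R -> S}).
Variables (M : lmodType R) (P : M -> Prop) (hP : submodule P).
Variables (T : lmodType S) (b : S -> M -> T) (hT : is_tensor h P b).

Lemma sub_tensor : is_tensor h (@TT R (SM hP)) (fun s q => b s (sinc q)).
Proof.
have Hb := tbal hT.
have PD : forall x y, P x -> P y -> P (x + y) by case: hP.
have PZ : forall c x, P x -> P (c *: x) by case: hP.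
split.
  split.
  - by move=> q _ c s s'; rewrite (bal1 Hb) //; apply: sincP.
  - by move=> s q q' _ _; rewrite -[sinc (q + q')]/(sincL hP (q + q')) linearD (bal2 Hb) //;
      apply: sincP.
  - move=> s r q _; rewrite (bal3 Hb); last exact: sincP.
    by rewrite -[sinc (r *: q)]/(sincL hP (r *: q)) linearZ.
move=> V phi Hphi; split.
  have Hb' : balanced h P (fun s m => phi s (sproj hP m)).
    split.
    - by move=> m Pm c s s'; rewrite (bal1 Hphi).
    - by move=> s m m' Pm Pm'; rewrite sprojD // (bal2 Hphi).
    - by move=> s r m Pm; rewrite sprojZ // (bal3 Hphi).
  case: (tens_ex hT Hb') => psi Hpsi; exists psi => s q _.
  by rewrite Hpsi ?sprojK //; exact: sincP.
move=> psi1 psi2 E; apply: (tens_uniq hT) => s m Pm.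
by rewrite -(sincK hP Pm); apply: E.
Qed.

End SubTens.

Lemma rho_inj (R S : comPzRingType) (h : {rmorphism R -> S}) (M : lmodType R)
  (P : M -> Prop) (hP : submodule P) (T0 : lmodType S) (b0 : S -> M -> T0)
  (T : lmodType S) (b : S -> M -> T) (rho : {linear T0 -> T}) :
  flat h -> is_tensor h P b0 -> is_tensor h (@TT R M) b -> is_rho P b0 b rho -> injective rho.
Proof.
move=> fl h0 hb hr.
apply: (fl _ _ (sincL hP) (@sinc_inj _ _ _ hP) _ _ _ _ (sub_tensor hP h0) hb).
by move=> s n; rewrite hr //; apply: sincP.
Qed.

Section Exist.
Variables (R S : comPzRingType) (h : {rmorphism R -> S}) (M : lmodType R).
Definition EX : choiceType := seq (S * M)%type.
Definition ev (V : lmodType S) (phi : S -> M -> V) (x : EX) : V := \sum_(p <- x) phi p.1 p.2.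
Definition ee (x y : EX) : Prop := forall (V : lmodType S) (phi : S -> M -> V),
  balanced h (@TT R M) phi -> ev phi x = ev phi y.
Definition ez : EX := [::].
Definition ead (x y : EX) : EX := x ++ y.
Definition eop (x : EX) : EX := [seq (- p.1, p.2) | p <- x].
Definition esc (c : S) (x : EX) : EX := [seq (c * p.1, p.2) | p <- x].
Section EvL.
Variables (V : lmodType S) (phi : S -> M -> V) (Hp : balanced h (@TT R M) phi).
Lemma ev_cat x y : ev phi (ead x y) = ev phi x + ev phi y.
Proof. exact: big_cat. Qed.
Lemma ev_sc c x : ev phi (esc c x) = c *: ev phi x.
Proof. by rewrite /ev big_map scaler_sumr; apply: eq_bigr => p _ /=; rewrite (balZ Hp). Qed.
Lemma ev_op x : ev phi (eop x) = - ev phi x.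
Proof.
rewrite /ev big_map -sumrN; apply: eq_bigr => p _ /=.
by rewrite -mulN1r (balZ Hp) // scaleN1r.
Qed.
Lemma ev_nil : ev phi ez = 0. Proof. exact: big_nil. Qed.
End EvL.
Lemma ee_refl x : ee x x. Proof. by []. Qed.
Lemma ee_sym x y : ee x y -> ee y x. Proof. by move=> H V phi Hp; rewrite H. Qed.
Lemma ee_trans x y w : ee x y -> ee y w -> ee x w.
Proof. by move=> H1 H2 V phi Hp; rewrite H1 ?H2. Qed.
Lemma ead_c x x' y y' : ee x x' -> ee y y' -> ee (ead x y) (ead x' y').
Proof. by move=> H1 H2 V phi Hp; rewrite !ev_cat H1 ?H2. Qed.
Lemma eop_c x x' : ee x x' -> ee (eop x) (eop x').
Proof. by move=> H V phi Hp; rewrite !(ev_op Hp) H. Qed.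
Lemma esc_c c x x' : ee x x' -> ee (esc c x) (esc c x').
Proof. by move=> H V phi Hp; rewrite !(ev_sc Hp) H. Qed.
Lemma eadA x y w : ee (ead x (ead y w)) (ead (ead x y) w).
Proof. by move=> V phi Hp; rewrite !ev_cat addrA. Qed.
Lemma eadC x y : ee (ead x y) (ead y x).
Proof. by move=> V phi Hp; rewrite !ev_cat addrC. Qed.
Lemma ead0 x : ee (ead ez x) x. Proof. by []. Qed.
Lemma eadN x : ee (ead (eop x) x) ez.
Proof. by move=> V phi Hp; rewrite ev_cat (ev_op Hp) addNr ev_nil. Qed.
Lemma escA a b x : ee (esc a (esc b x)) (esc (a * b) x).
Proof. by move=> V phi Hp; rewrite !(ev_sc Hp) scalerA. Qed.
Lemma esc1 x : ee (esc 1 x) x.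
Proof. by move=> V phi Hp; rewrite !(ev_sc Hp) scale1r. Qed.
Lemma escDr a x y : ee (esc a (ead x y)) (ead (esc a x) (esc a y)).
Proof. by move=> V phi Hp; rewrite !(ev_sc Hp, ev_cat) scalerDr. Qed.
Lemma escDl a b x : ee (esc (a + b) x) (ead (esc a x) (esc b x)).
Proof. by move=> V phi Hp; rewrite !(ev_sc Hp, ev_cat) scalerDl. Qed.

Definition TensT : lmodType S := @QL _ _ _ _ _ _ _ ee_refl ee_sym ee_trans ead_c eop_c esc_c
  eadA eadC ead0 eadN escA esc1 escDr escDl.
Definition epi (x : EX) : TensT := @qpi _ _ ee_refl ee_sym ee_trans x.
Lemma epiE x y : epi x = epi y <-> ee x y. Proof. exact: qpiE. Qed.
Lemma epi_surj (q : TensT) : exists x, q = epi x. Proof. exact: qpi_surj. Qed.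
Lemma epi_add x y : epi (ead x y) = epi x + epi y. Proof. exact: qpi_add. Qed.
Lemma epi_sc c x : epi (esc c x) = c *: epi x. Proof. exact: qpi_sc. Qed.
Lemma epi_nil : epi ez = 0. Proof. exact: qpi_zero. Qed.
Definition tb (s : S) (m : M) : TensT := epi [:: (s, m)].

Lemma epi_cons p x : epi (p :: x) = tb p.1 p.2 + epi x.
Proof. by case: p => a b; rewrite /tb -epi_add. Qed.

Lemma tens_exists : is_tensor h (@TT R M) tb.
Proof.
split.
  split.
  - move=> m _ c s s'; rewrite /tb -epi_sc -epi_add; apply/epiE => V phi Hp.
    by rewrite ev_cat (ev_sc Hp) /ev !big_seq1 /= (bal1 Hp).
  - move=> s m m' _ _; rewrite /tb -epi_add; apply/epiE => V phi Hp.
    by rewrite ev_cat /ev !big_seq1 /= (bal2 Hp).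
  - move=> s r m _; rewrite /tb; apply/epiE => V phi Hp.
    by rewrite /ev !big_seq1 /= (bal3 Hp).
move=> V phi Hp; split.
  pose psi (q : TensT) := ev phi (repr q).
  have psiE : forall x, psi (epi x) = ev phi x.
    move=> x; rewrite /psi.
    exact: (@repr_e _ _ ee_refl ee_sym ee_trans x V phi Hp).
  have psil : linear psi.
    move=> c q q'; case: (epi_surj q) => x ->; case: (epi_surj q') => y ->.
    by rewrite -epi_sc -epi_add !psiE ev_cat (ev_sc Hp).
  exists (mkLin psil) => s m _; rewrite mkLinE psiE /ev big_seq1.
  by [].
move=> psi1 psi2 E q; case: (epi_surj q) => x ->.
elim: x => [|p x IH]; first by rewrite epi_nil !linear0.
by rewrite epi_cons !linearD IH E.
Qed.
End Exist.

Section DP.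
Variables (A : comPzRingType) (J : Type) (N : J -> lmodType A).
Lemma dpD (f g : dprod N) i : (f + g) i = f i + g i. Proof. by []. Qed.
Lemma dpZ c (f : dprod N) i : (c *: f) i = c *: f i. Proof. by []. Qed.
Lemma dp0 i : (0 : dprod N) i = 0. Proof. by []. Qed.
Lemma dpN (f : dprod N) i : (- f) i = - f i. Proof. by []. Qed.
Lemma dp_sum (K : Type) (s : seq K) (F : K -> dprod N) i : (\sum_(k <- s) F k) i = \sum_(k <- s) F k i.
Proof. by elim: s => [|k s IH]; rewrite ?big_nil ?big_cons ?dpD ?IH. Qed.
End DP.

Section Core.
Variables (R S : comPzRingType) (h : {rmorphism R -> S}) (fl : flat h).
Variables (M : lmodType R) (T : lmodType S) (b : S -> M -> T) (hT : is_tensor h (@TT R M) b).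
Variables (I : Type) (r : I -> R).
Variables (Tp : lmodType S) (bp : S -> dprod (fun _ : I => M) -> Tp)
  (hTp : is_tensor h (@TT R (dprod (fun _ : I => M))) bp).
Variables (G : forall i : I, {linear Tp -> T})
  (GE : forall i s x, G i (bp s x) = b s (x i))
  (Ginj : injective (fun u : Tp => (fun i => G i u) : dprod (fun _ : I => T))).

Definition Kp (x : M) : Prop := forall i, r i *: x = 0.
Lemma Kp_sub : submodule Kp.
Proof.
split.
- by move=> i; rewrite scaler0.
- by move=> x y Hx Hy i; rewrite scalerDr Hx Hy addr0.
- by move=> c x Hx i; rewrite scalerA mulrC -scalerA Hx scaler0.
Qed.

Let hb := tbal hT.
Let hbK : balanced h Kp b := bal_weaken Kp hb.
Let hW := Span_sub hbK.
Let W := Span Kp b.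
Let QT := QM hW.
Let pi := qprojL hW.
Let MK := QM Kp_sub.
Let piK := qprojL Kp_sub.
Let liftK (q : MK) : M := @qlift _ _ _ Kp_sub q.
Lemma liftKK q : piK (liftK q) = q. Proof. by rewrite qprojLE qliftK. Qed.
Lemma liftK_proj x : Kp (liftK (piK x) - x). Proof. by rewrite qprojLE; apply: qlift_proj. Qed.

Lemma piK_eq x y : Kp (x - y) -> forall s, pi (b s x) = pi (b s y).
Proof.
move=> H s; rewrite !qprojLE; apply/qproj_eq.
by rewrite -(balB hb); apply: Span1.
Qed.

Definition bQ (s : S) (q : MK) : QT := pi (b s (liftK q)).

Lemma lift_eq (x : M) (q : MK) : piK x = q -> Kp (liftK q - x).
Proof. by move=> <-; apply: liftK_proj. Qed.

Lemma lift_lin c q q' : Kp (liftK (c *: q + q') - (c *: liftK q + liftK q')).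
Proof.
by apply: lift_eq; rewrite linearP !liftKK.
Qed.

Lemma Kp_sym x y : Kp (x - y) -> Kp (y - x).
Proof. by move=> H i; rewrite -opprB scalerN H oppr0. Qed.
Lemma liftZ c q : Kp (c *: liftK q - liftK (c *: q)).
Proof. by apply: Kp_sym; apply: lift_eq; rewrite linearZ liftKK. Qed.
Lemma liftD q q' : Kp (liftK (q + q') - (liftK q + liftK q')).
Proof. by apply: lift_eq; rewrite linearD !liftKK. Qed.

Lemma bQ_tensor : is_tensor h (@TT R MK) bQ.
Proof.
split.
  split.
  - by move=> q _ c s s'; rewrite /bQ (bal1 hb) // linearP.
  - move=> s q q' _ _; rewrite /bQ -linearD -(bal2 hb) //; apply: piK_eq.
    exact: liftD.
  - move=> s c q _; rewrite /bQ (bal3 hb) //; apply: piK_eq.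
    exact: liftZ.
move=> V phi Hp; split.
  have Hp' : balanced h (@TT R M) (fun s m => phi s (piK m)).
    split.
    - by move=> m _ c s s'; rewrite (bal1 Hp).
    - by move=> s m m' _ _; rewrite linearD (bal2 Hp).
    - by move=> s c m _; rewrite (bal3 Hp) // linearZ.
  case: (tens_ex hT Hp') => psi Hpsi.
  have Hz : forall t, W t -> psi t = 0.
    move=> t [l [Hl ->]]; rewrite linear_sum big1_seq // => p /andP [_ /Hl Hk].
    rewrite Hpsi // qprojLE.
    have -> : qproj Kp_sub p.2 = 0 by apply/qproj0.
    by rewrite (bal_m0 Hp).
  case: (quot_univ hW Hz) => g Hg; exists g => s q _.
  by rewrite /bQ qprojLE Hg Hpsi //; congr phi; exact: liftKK.
move=> psi1 psi2 E q.
have l1 : linear (fun t : T => psi1 (pi t)) by move=> c x y; rewrite !linearP.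
have l2 : linear (fun t : T => psi2 (pi t)) by move=> c x y; rewrite !linearP.
have := tens_uniq hT (psi1 := mkLin l1) (psi2 := mkLin l2).
move=> /(_ _ (@qlift _ _ _ hW q)); rewrite !mkLinE qliftK; apply.
move=> s m _; rewrite !mkLinE /=.
have -> : qproj hW (b s m) = bQ s (piK m).
  by rewrite /bQ; apply: piK_eq; apply: Kp_sym; apply: liftK_proj.
by apply: E.
Qed.

Definition phiK (x : M) : dprod (fun _ : I => M) := fun i => r i *: x.
Lemma phiK_lin : linear phiK.
Proof. by move=> c x y; apply: functional_extensionality_dep => i; rewrite /phiK dpD dpZ scalerDr !scalerA mulrC. Qed.
Lemma phiK0 x : Kp x -> mkLin phiK_lin x = 0.
Proof. by move=> H; apply: functional_extensionality_dep => i; rewrite mkLinE /phiK H. Qed.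

Lemma core (t : T) : (forall i, h (r i) *: t = 0) -> Span Kp b t.
Proof.
move=> Ht.
case: (quot_univ Kp_sub phiK0) => fL HfL.
have fLinj : injective fL.
  move=> q q'; case: (qproj_surj q) => x ->; case: (qproj_surj q') => y ->.
  rewrite !HfL !mkLinE => E; apply/qproj_eq => i.
  by rewrite scalerBr; have := congr1 (fun f => f i) E; rewrite /phiK /= => ->; rewrite subrr.
have Hg : balanced h (@TT R MK) (fun s q => bp s (fL q)).
  have hbp := tbal hTp.
  split.
  - by move=> q _ c s s'; rewrite (bal1 hbp).
  - by move=> s q q' _ _; rewrite linearD (bal2 hbp).
  - by move=> s c q _; rewrite (bal3 hbp) // linearZ.
case: (tens_ex bQ_tensor Hg) => g HgE.
have ginj : injective g.
  by apply: (fl fLinj bQ_tensor hTp) => s n; apply: HgE.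
have key : forall i u, G i (g (pi u)) = h (r i) *: u.
  move=> i.
  have l1 : linear (fun u : T => G i (g (pi u))) by move=> c x y; rewrite !linearP.
  have l2 : linear (fun u : T => h (r i) *: u) by move=> c x y; rewrite scalerDr !scalerA mulrC.
  have := tens_uniq hT (psi1 := mkLin l1) (psi2 := mkLin l2).
  move=> H u; have := H _ u; rewrite (mkLinE l1) (mkLinE l2) /=; apply => s m _.
  rewrite (mkLinE l1) (mkLinE l2) /=.
  rewrite /lf.
  have -> : qproj hW (b s m) = bQ s (piK m).
    by rewrite /bQ; apply: piK_eq; apply: Kp_sym; apply: liftK_proj.
  rewrite HgE // qprojLE HfL GE (mkLinE phiK_lin) /phiK -(bal3 hb) //.
  by rewrite (balZ hb).
apply: (proj1 (@qproj0 _ _ _ hW t)); rewrite -qprojLE.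
apply: ginj; apply: Ginj; apply: functional_extensionality_dep => i /=.
by rewrite key Ht !linear0.
Qed.
End Core.

Section Prod.
Variables (R S : comPzRingType) (h : {rmorphism R -> S}).
Variables (M : lmodType R) (T : lmodType S) (b : S -> M -> T) (hT : is_tensor h (@TT R M) b).
Variables (I : Type).
Variables (Tp : lmodType S) (bp : S -> dprod (fun _ : I => M) -> Tp)
  (hTp : is_tensor h (@TT R (dprod (fun _ : I => M))) bp).

Lemma prod_maps : exists G : I -> {linear Tp -> T}, forall i s x, G i (bp s x) = b s (x i).
Proof.
have hb := tbal hT.
suff H : forall i, exists G : {linear Tp -> T}, forall s x, G (bp s x) = b s (x i).
  by case: (choice H) => G HG; exists G.
move=> i.
have Hp : balanced h (@TT R (dprod (fun _ : I => M))) (fun s x => b s (x i)).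
  split.
  - by move=> x _ c s s'; rewrite (bal1 hb).
  - by move=> s x y _ _; rewrite dpD (bal2 hb).
  - by move=> s c x _; rewrite dpZ (bal3 hb).
by case: (tens_ex hTp Hp) => G HG; exists G => s x; apply: HG.
Qed.

Lemma bp_sum (K : Type) (l : seq K) (F : K -> dprod (fun _ : I => M)) s :
  bp s (\sum_(k <- l) F k) = \sum_(k <- l) bp s (F k).
Proof.
have hb := tbal hTp.
elim: l => [|k l IH]; first by rewrite !big_nil (bal_m0 hb).
by rewrite !big_cons (bal2 hb) // IH.
Qed.
End Prod.

Section Fin.
Variables (R S : comPzRingType) (h : {rmorphism R -> S}).
Variables (M : lmodType R) (T : lmodType S) (b : S -> M -> T) (hT : is_tensor h (@TT R M) b).
Variables (I : finType).
Variables (Tp : lmodType S) (bp : S -> dprod (fun _ : I => M) -> Tp)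
  (hTp : is_tensor h (@TT R (dprod (fun _ : I => M))) bp).
Variables (G : forall i : I, {linear Tp -> T})
  (GE : forall i s x, G i (bp s x) = b s (x i)).

Definition delta (i : I) (m : M) : dprod (fun _ : I => M) := fun j => if j == i then m else 0.
Lemma delta_lin i : linear (delta i).
Proof.
move=> c x y; apply: functional_extensionality_dep => j; rewrite dpD dpZ /delta.
by case: (j == i); rewrite ?scaler0 ?addr0.
Qed.

Lemma fin_inj : injective (fun u : Tp => (fun i => G i u) : dprod (fun _ : I => T)).
Proof.
have hb := tbal hT; have hbp := tbal hTp.
have [io Hio] : exists io : I -> {linear T -> Tp}, forall i s m, io i (b s m) = bp s (delta i m).
  suff H : forall i, exists f : {linear T -> Tp}, forall s m, f (b s m) = bp s (delta i m).
    by case: (choice H) => f Hf; exists f.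
  move=> i.
  have Hp : balanced h (@TT R M) (fun s m => bp s (delta i m)).
    split.
    - by move=> x _ c s s'; rewrite (bal1 hbp).
    - by move=> s x y _ _; rewrite -[delta i (x + y)]/(mkLin (delta_lin i) (x + y)) linearD (bal2 hbp).
    - by move=> s c x _; rewrite (bal3 hbp) // -[delta i (c *: x)]/(mkLin (delta_lin i) (c *: x)) linearZ.
  by case: (tens_ex hT Hp) => f Hf; exists f => s m; apply: Hf.
have psil : linear (fun u : Tp => \sum_i io i (G i u)).
  move=> c x y; rewrite scaler_sumr -big_split /=; apply: eq_bigr => i _.
  by rewrite !linearP.
have idl : linear (fun u : Tp => u) by [].
have E : forall u, mkLin psil u = mkLin idl u.
  apply: (tens_uniq hTp) => s x _; rewrite (mkLinE psil) (mkLinE idl) /=.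
  rewrite (eq_bigr (fun i => bp s (delta i (x i)))); last by move=> i _; rewrite GE Hio.
  rewrite -(bp_sum hTp); congr bp; apply: functional_extensionality_dep => j.
  rewrite dp_sum (bigD1 j) //= /delta eqxx big1 ?addr0 // => i ne.
  by rewrite eq_sym (negbTE ne).
move=> u v Huv; rewrite -[u](E u) -[v](E v) !(mkLinE psil) /=.
by apply: eq_bigr => i _; rewrite (congr1 (fun f => f i) Huv).
Qed.
End Fin.

Section KG.
Variables (A : comPzRingType) (V : lmodType A).

Lemma gen_norm k (g : 'I_k -> A) r : gen_ideal (fun y => exists i, y = g i) r ->
  exists c : 'I_k -> A, r = \sum_i c i * g i.
Proof.
move=> [k' [d [g' [H ->]]]].
have [s Hs] : exists s : 'I_k' -> 'I_k, forall l, g' l = g (s l).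
  by apply: (@fin_all_exists _ (fun _ => 'I_k) (fun l i => g' l = g i)) => l;
    case: (H l) => i ->; exists i.
exists (fun i => \sum_(l | s l == i) d l).
rewrite (partition_big s predT) //=; apply: eq_bigr => i _.
by rewrite mulr_suml; apply: eq_bigr => l /eqP <-; rewrite Hs.
Qed.

Lemma prod_cnt (I : finType) k (phi : I -> 'I_k) (g : 'I_k -> A) :
  \prod_j g (phi j) = \prod_i g i ^+ #|[pred j | phi j == i]|.
Proof.
rewrite (partition_big phi predT) //=; apply: eq_bigr => i _.
rewrite (eq_bigr (fun _ => g i)) => [|j /eqP -> //].
by rewrite -prodr_const.
Qed.

Lemma sum_cnt (I : finType) k (phi : I -> 'I_k) :
  (\sum_i #|[pred j | phi j == i]| = #|I|)%N.
Proof.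
rewrite -sum1_card (partition_big phi predT) //=; apply: eq_bigr => i _.
by rewrite -sum1_card.
Qed.

Lemma KG k (g : 'I_k -> A) N (x : V) : (forall i, g i ^+ N *: x = 0) ->
  forall f : 'I_(k * N).+1 -> A, (forall j, gen_ideal (fun y => exists i, y = g i) (f j)) ->
  (\prod_j f j) *: x = 0.
Proof.
move=> Hx f Hf.
have [C HC] : exists C : 'I_(k * N).+1 -> 'I_k -> A, forall j, f j = \sum_i C j i * g i.
  by apply: (@fin_all_exists _ (fun _ => 'I_k -> A) (fun j c => f j = \sum_i c i * g i)) => j;
    apply: gen_norm.
rewrite (eq_bigr _ (fun j _ => HC j)) bigA_distr_bigA /= scaler_suml big1 // => phi _.
rewrite big_split /= prod_cnt.
have [i0 Hi0] : exists i0, (N <= #|[pred j | phi j == i0]|)%N.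
  apply/existsP; apply: contraT; rewrite negb_exists => /forallP Hl.
  have := sum_cnt phi; rewrite card_ord => E.
  have : (\sum_(i < k) #|[pred j | phi j == i]| <= \sum_(i < k) N)%N.
    by apply: leq_sum => i _; have := Hl i; rewrite -ltnNge => /ltnW.
  by rewrite E sum_nat_const card_ord ltnNge mulnC leqnn.
rewrite (bigD1 i0) //= -(subnK Hi0) exprD mulrA mulrC mulrA.
by rewrite -!scalerA Hx !scaler0.
Qed.
End KG.

Section More.
Variables (A : comPzRingType).

Lemma exp_kill (V : lmodType A) (r : A) (x : V) n n' : (n <= n')%N -> r ^+ n *: x = 0 -> r ^+ n' *: x = 0.
Proof. by move=> le H; rewrite -(subnK le) exprD -scalerA H scaler0. Qed.

Lemma common_exp (V : lmodType A) k (r : 'I_k -> A) (x : V) :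
  (forall i, exists n, r i ^+ n *: x = 0) -> exists N, forall i, r i ^+ N *: x = 0.
Proof.
move=> H; have [n Hn] := @fin_all_exists _ (fun _ => nat) (fun i n => r i ^+ n *: x = 0) H.
exists (\sum_i n i) => i; apply: (exp_kill _ (Hn i)).
by rewrite (bigD1 i) //= leq_addr.
Qed.

Lemma gen_sum k (g : 'I_k -> A) (c : 'I_k -> A) :
  gen_ideal (fun y => exists i, y = g i) (\sum_i c i * g i).
Proof. by exists k, c, g; split => // i; exists i. Qed.

Lemma blocking (a : A -> Prop) n L (f : 'I_(n * L) -> A) : (forall j, a (f j)) ->
  exists F : nat -> A, (forall l, (l < L)%N -> ideal_pow a n (F l)) /\ \prod_j f j = \prod_(l < L) F l.
Proof.
elim: L f => [|L IH] f Hf.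
  by exists (fun _ => 1); split => // ; rewrite big_ord0; move: f Hf; rewrite muln0 => f _; rewrite big_ord0.
move: f Hf; rewrite mulnS => f Hf.
have [F [HF E]] := IH (fun j => f (rshift n j)) (fun j => Hf _).
exists (fun l => if l is l'.+1 then F l' else \prod_(j < n) f (lshift (n * L) j)); split.
  by case => [_|l /= lt]; [apply: pow_gen => j; apply: Hf|apply: HF].
by rewrite big_split_ord big_ord_recl /= E; congr (_ * _); apply: eq_bigr => l _; rewrite lift0.
Qed.

Lemma fgK (V : lmodType A) (a : A -> Prop) n k (g : 'I_k -> A) :
  (forall r, ideal_pow a n r <-> gen_ideal (fun y => exists i, y = g i) r) ->
  forall N (x : V), (forall i, g i ^+ N *: x = 0) -> Gamma a x.
Proof.
move=> Hg N x Hx; exists (n * (k * N).+1)%N; apply: gen_kill => y [f [Hf ->]].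
have [F [HF ->]] := blocking Hf.
have := @KG A V k g N x Hx (fun l => F l); apply => l.
by apply/Hg; apply: HF.
Qed.

Lemma ideal_opp (J : A -> Prop) x : is_ideal J -> J x -> J (- x).
Proof. by move=> [_ _ JM] H; rewrite -mulN1r; apply: JM. Qed.

Lemma prod_approx (B J : A -> Prop) (hJ : is_ideal J) L (f : 'I_L -> A) :
  (forall j, exists2 be, B be & J (f j - be)) ->
  exists be : 'I_L -> A, (forall j, B (be j)) /\ J (\prod_j f j - \prod_j be j).
Proof.
case: hJ => J0 JD JM.
elim: L f => [|L IH] f Hf.
  by exists (fun _ => 0); split => [[]//|]; rewrite !big_ord0 subrr.
have [be0 B0 J0'] := Hf ord0.
have [be [Hbe Hj]] := IH (fun j => f (lift ord0 j)) (fun j => Hf _).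
exists (fun j => if unlift ord0 j is Some j' then be j' else be0); split.
  by move=> j; case: (unlift _ _).
rewrite !big_ord_recl /= unlift_none.
have -> : \prod_(i < L) (if unlift ord0 (lift ord0 i) is Some j' then be j' else be0) =
  \prod_(i < L) be i by apply: eq_bigr => i _; rewrite liftK.
set P := \prod_(i < L) f (lift ord0 i); set Q := \prod_(i < L) be i.
have -> : f ord0 * P - be0 * Q = f ord0 * (P - Q) + (f ord0 - be0) * Q.
  by rewrite mulrBr mulrBl addrA subrK.
by apply: JD; [apply: JM|rewrite mulrC; apply: JM].
Qed.

End More.

Section Noeth.
Variables (A : comPzRingType) (M : lmodType A) (hN : noetherian_module M).

Lemma noeth_approx (s : seq M) (J : A -> Prop) : is_ideal J ->
  exists k (g : 'I_k -> A), (forall i, J (g i)) /\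
    forall r, J r -> exists c : 'I_k -> A, forall m, m \in s -> (r - \sum_i c i * g i) *: m = 0.
Proof.
elim: s J => [|m0 s IH] J hJ.
  by exists 0%N, (fun _ => 0); split => [[]//|r _]; exists (fun _ => 0).
have [k [g [Hg Hc]]] := IH J hJ.
have hJ' := hJ; case: hJ' => J0 JD JM.
pose J' r := J r /\ forall m, m \in s -> r *: m = 0.
pose N' (y : M) := exists r, J' r /\ y = r *: m0.
have subN : submodule N'.
  split.
  - by exists 0; split; [split => // m _; rewrite scale0r|rewrite scale0r].
  - move=> x y [r1 [[H1 K1] ->]] [r2 [[H2 K2] ->]]; exists (r1 + r2); split; last by rewrite scalerDl.
    by split; [apply: JD|move=> m Hm; rewrite scalerDl K1 ?K2 ?addr0].
  - move=> c x [r1 [[H1 K1] ->]]; exists (c * r1); split; last by rewrite scalerA.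
    by split; [apply: JM|move=> m Hm; rewrite -scalerA K1 ?scaler0].
have [k' [e [He Hspan]]] := hN subN.
have [rr Hrr] := @fin_all_exists _ (fun _ => A) (fun l r => J' r /\ e l = r *: m0) He.
exists (k + k')%N, (fun i => match split i with inl i1 => g i1 | inr i2 => rr i2 end); split.
  by move=> i; case: (split i) => // l; case: (Hrr l) => [[]].
move=> r Jr; have [c Hcr] := Hc r Jr.
set r' := r - \sum_i c i * g i.
have J'r : J' r'.
  split; last exact: Hcr.
  apply: JD => //; apply: ideal_opp => //; apply: ideal_sum => // i.
  exact: JM.
have [d Hd] := Hspan _ (ex_intro _ r' (conj J'r erefl)).
exists (fun i => match split i with inl i1 => c i1 | inr i2 => d i2 end) => m.
have -> : r - \sum_i (match split i with inl i1 => c i1 | inr i2 => d i2 end) *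
    (match split i with inl i1 => g i1 | inr i2 => rr i2 end) = r' - \sum_l d l * rr l.
  rewrite big_split_ord /= opprD addrA; congr (_ - _ - _); apply: eq_bigr => i _;
    by rewrite ?split_l ?split_r.
rewrite inE => /orP [/eqP ->|Hm].
  rewrite scalerBl Hd scaler_suml; apply/eqP; rewrite subr_eq0; apply/eqP.
  by apply: eq_bigr => l _; rewrite -scalerA; case: (Hrr l) => _ ->.
rewrite scalerBl (proj2 J'r) // scaler_suml big1 ?subr0 // => l _.
by rewrite -scalerA; case: (Hrr l) => [[_ K] _]; rewrite K ?scaler0.
Qed.

Lemma noeth_approx_all (J : A -> Prop) : is_ideal J ->
  exists k (g : 'I_k -> A), (forall i, J (g i)) /\
    forall r, J r -> exists c : 'I_k -> A, forall m : M, (r - \sum_i c i * g i) *: m = 0.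
Proof.
move=> hJ.
have [kM [gM [_ HgM]]] := hN (N := @TT A M) ltac:(by []).
have [k [g [Hg Hc]]] := noeth_approx (codom gM) hJ.
exists k, g; split => // r Jr; have [c Hcr] := Hc r Jr; exists c => m.
have [d ->] := HgM m I; rewrite scaler_sumr big1 // => o _.
by rewrite scalerA mulrC -scalerA Hcr ?scaler0 // codom_f.
Qed.
End Noeth.

Lemma noethK (A : comPzRingType) (M : lmodType A) (a : A -> Prop) k (g : 'I_k -> A) :
  (forall r, a r -> exists c : 'I_k -> A, forall m : M, (r - \sum_i c i * g i) *: m = 0) ->
  forall N (x : M), (forall i, g i ^+ N *: x = 0) -> Gamma a x.
Proof.
move=> Hg N x Hx; exists (k * N).+1; apply: gen_kill => y [f [Hf ->]].
have hJ : is_ideal (fun i : A => forall m : M, i *: m = 0).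
  split.
  - by move=> m; rewrite scale0r.
  - by move=> u v Hu Hv m; rewrite scalerDl Hu Hv addr0.
  - by move=> c u Hu m; rewrite -scalerA Hu scaler0.
have [be [Hbe Hj]] := @prod_approx A (gen_ideal (fun y => exists i, y = g i)) _ hJ _ f
  (fun j => let: ex_intro c Hc := Hg _ (Hf j) in ex_intro2 _ _ _ (gen_sum g c) Hc).
rewrite -[\prod_j f j](subrK (\prod_j be j)) scalerDl Hj add0r.
exact: KG Hx _ Hbe.
Qed.

Section MainL.
Variables (R S : comPzRingType) (h : {rmorphism R -> S}) (a : R -> Prop) (ha : is_ideal a).

Lemma h_pow N r : ideal_pow a N r -> ideal_pow (ext_ideal h a) N (h r).
Proof.
move=> [k [c [g [Hg ->]]]].
have [f Hf] := @fin_all_exists _ (fun _ => 'I_N -> R)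
  (fun i f => (forall j, a (f j)) /\ g i = \prod_j f j) Hg.
exists k, (fun i => h (c i)), (fun i => \prod_j h (f i j)); split.
  by move=> i; exists (fun j => h (f i j)); split => // j; apply: gen1; exists (f i j); case: (Hf i).
rewrite rmorph_sum; apply: eq_bigr => i _.
by case: (Hf i) => _ ->; rewrite rmorphM rmorph_prod.
Qed.

Section TG.
Variables (M : lmodType R) (T : lmodType S) (b : S -> M -> T) (hT : is_tensor h (@TT R M) b).

Lemma tensGamma_aux N : forall m : M, (forall r, ideal_pow a N r -> r *: m = 0) ->
  forall f : 'I_N -> S, (forall j, ext_ideal h a (f j)) -> forall s, (\prod_j f j) *: b s m = 0.
Proof.
have hb := tbal hT.
elim: N => [|N IH] m Hm f Hf s.
  have := Hm 1 (pow0 a); rewrite scale1r => ->.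
  by rewrite big_ord0 scale1r (bal_m0 hb).
rewrite big_ord_recl -scalerA.
apply: (gen_kill (X := fun y => exists al, a al /\ y = h al)) (Hf ord0) => y [al [Hal ->]].
rewrite scalerA mulrC -scalerA -(balZ hb) // (bal3 hb) //.
apply: IH => [r Hr|j]; last exact: Hf.
by rewrite scalerA mulrC; apply: Hm; apply: pow_mulS.
Qed.

Lemma tensGamma (m : M) s : Gamma a m -> Gamma (ext_ideal h a) (b s m).
Proof.
move=> [N HN]; exists N; apply: gen_kill => y [f [Hf ->]].
exact: tensGamma_aux.
Qed.

Lemma Gamma_sum (A : comPzRingType) (V : lmodType A) (J : A -> Prop) (K : eqType) (l : seq K) (F : K -> V) :
  (forall k, k \in l -> Gamma J (F k)) -> Gamma J (\sum_(k <- l) F k).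
Proof.
move=> H; have [G0 GD _] := @Gamma_sub A V J.
elim: l H => [|k l IH] H; first by rewrite big_nil.
rewrite big_cons; apply: GD; first by apply: H; rewrite inE eqxx.
by apply: IH => k' Hk; apply: H; rewrite inE Hk orbT.
Qed.

Variables (P : M -> Prop) (hP : submodule P) (T0 : lmodType S) (b0 : S -> M -> T0)
  (h0 : is_tensor h P b0) (rho : {linear T0 -> T}) (hr : is_rho P b0 b rho).

Lemma L_img : (forall x, P x -> Gamma a x) -> forall u, Gamma (ext_ideal h a) (rho u).
Proof.
move=> PG u; have [l [Hl ->]] := spanning h0 u.
rewrite linear_sum; apply: Gamma_sum => p Hp.
by rewrite hr; [apply: tensGamma; apply: PG|]; apply: Hl.
Qed.

Lemma from_span (K : M -> Prop) t : (forall x, K x -> P x) -> Span K b t -> exists u, rho u = t.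
Proof.
move=> KP [l [Hl ->]]; exists (\sum_(p <- l) b0 p.1 p.2).
by rewrite linear_sum; apply: eq_big_seq => p Hp; rewrite hr //; apply: KP; apply: Hl.
Qed.

Lemma L_surj (fl : flat h) k (g : 'I_k -> R) :
  (forall N x, (forall i, g i ^+ N *: x = 0) -> P x) ->
  forall N t, (forall i, h (g i) ^+ N *: t = 0) -> exists u, rho u = t.
Proof.
move=> KP N t Ht.
have hTp := @tens_exists R S h (dprod (fun _ : 'I_k => M)).
have [G GE] := prod_maps hT hTp.
have Ginj := fin_inj hT hTp GE.
have := core fl hT hTp GE Ginj (r := fun i => g i ^+ N) (t := t).
move=> /(_ _) H; apply: (from_span (K := fun x => forall i, g i ^+ N *: x = 0)).
  by move=> x Hx; apply: (KP N).
by apply: H => i; rewrite rmorphXn.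
Qed.

End TG.
End MainL.

Section Master.
Variables (R S : comPzRingType) (h : {rmorphism R -> S}) (a : R -> Prop).
Hypotheses (fl : flat h) (ha : is_ideal a).

Lemma master (M : lmodType R) k (g : 'I_k -> R) (Hga : forall i, a (g i))
  (KGa : forall N (x : M), (forall i, g i ^+ N *: x = 0) -> Gamma a x)
  (T : lmodType S) (b : S -> M -> T)
  (T0 : lmodType S) (b0 : S -> M -> T0) (rho : {linear T0 -> T})
  (T1 : lmodType S) (b1 : S -> M -> T1) (rhobar : {linear T1 -> T}) :
  is_tensor h (@TT R M) b ->
  is_tensor h (Gamma a) b0 -> is_rho (Gamma a) b0 b rho ->
  is_tensor h (Gammabar a) b1 -> is_rho (Gammabar a) b1 b rhobar ->
  [/\ (forall x : M, Gamma a x <-> Gammabar a x),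
      (forall t : T, Gamma (ext_ideal h a) t <-> Gammabar (ext_ideal h a) t),
      iso_onto rho (Gamma (ext_ideal h a))
    & iso_onto rhobar (Gammabar (ext_ideal h a))].
Proof.
move=> hT h0 hr0 h1 hr1.
have E1 : forall x : M, Gamma a x <-> Gammabar a x.
  move=> x; split; first exact: Gamma_bar.
  move=> Hx; have [N HN] := common_exp (fun i => Hx _ (Hga i)).
  exact: KGa HN.
have gext : forall i, ext_ideal h a (h (g i)) by move=> i; apply: gen1; exists (g i).
have surj : forall (P : M -> Prop) (T2 : lmodType S) (b2 : S -> M -> T2) (rh : {linear T2 -> T}),
    is_tensor h P b2 -> is_rho P b2 b rh ->
    (forall x, Gamma a x -> P x) ->
    forall t, Gammabar (ext_ideal h a) t -> exists u, rh u = t.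
  move=> P T2 b2 rh h2 hr2 GP t Ht.
  have [N HN] := common_exp (fun i => Ht _ (gext i)).
  by apply: (L_surj hT hr2 fl (g := g) _ HN) => N' x Hx; apply: GP; apply: KGa Hx.
have img0 := L_img hT h0 hr0 (fun x Hx => Hx).
have img1 := L_img hT h1 hr1 (fun x Hx => proj2 (E1 x) Hx).
have E2 : forall t : T, Gamma (ext_ideal h a) t <-> Gammabar (ext_ideal h a) t.
  move=> t; split; first exact: Gamma_bar.
  by move=> Ht; have [u <-] := surj _ _ _ _ h0 hr0 (fun x Hx => Hx) t Ht.
split => //.
  split; first exact: (rho_inj (Gamma_sub M a) fl h0 hT hr0).
  move=> v; split; last by move=> [u <-].
  by move=> /E2; apply: surj h0 hr0 (fun x Hx => Hx) v.
split; first exact: (rho_inj (Gammabar_sub M a) fl h1 hT hr1).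
move=> v; split; last by move=> [u <-]; apply/E2.
by apply: surj h1 hr1 (fun x Hx => Gamma_bar Hx) v.
Qed.

Lemma partC (ml : mittag_leffler h) (M : lmodType R)
  (T : lmodType S) (b : S -> M -> T)
  (T0 : lmodType S) (b0 : S -> M -> T0) (rho : {linear T0 -> T}) :
  is_tensor h (@TT R M) b ->
  is_tensor h (Gamma a) b0 -> is_rho (Gamma a) b0 b rho ->
  iso_onto rho (Gamma (ext_ideal h a)).
Proof.
move=> hT h0 hr0.
split; first exact: (rho_inj (Gamma_sub M a) fl h0 hT hr0).
move=> v; split; last by move=> [u <-]; apply: (L_img hT h0 hr0 (fun x Hx => Hx)).
move=> [N HN].
pose I := {r : R | ideal_pow a N r}.
have hTp := @tens_exists R S h (dprod (fun _ : I => M)).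
have [G GE] := prod_maps hT hTp.
have Ginj : injective (fun u => (fun i => G i u) : dprod (fun _ : I => T)).
  exact: (ml I (fun _ => M) _ _ (fun _ => T) (fun _ => b) G hTp (fun _ => hT) GE).
have := core fl hT hTp GE Ginj (r := fun i : I => sval i) (t := v).
move=> /(_ _) H; apply: (from_span hr0 (K := fun x => forall i : I, sval i *: x = 0)).
  by move=> x Hx; exists N => r Hr; apply: (Hx (exist _ r Hr)).
by apply: H => i; apply: HN; apply: h_pow; apply: svalP.
Qed.
End Master.


Theorem corollary8p6 (R S : comPzRingType) (h : {rmorphism R -> S}) (a : R -> Prop) :
  flat h -> is_ideal a ->
  (* (a) *)
  ((exists n : nat, (1 <= n)%N /\ fg_ideal (ideal_pow a n)) ->
   forall (M : lmodType R)
     (T : lmodType S) (b : S -> M -> T)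
     (T0 : lmodType S) (b0 : S -> M -> T0) (rho : {linear T0 -> T})
     (T1 : lmodType S) (b1 : S -> M -> T1) (rhobar : {linear T1 -> T}),
     is_tensor h (@TT R M) b ->
     is_tensor h (Gamma a) b0 -> is_rho (Gamma a) b0 b rho ->
     is_tensor h (Gammabar a) b1 -> is_rho (Gammabar a) b1 b rhobar ->
     [/\ (forall x : M, Gamma a x <-> Gammabar a x),
         (forall t : T, Gamma (ext_ideal h a) t <-> Gammabar (ext_ideal h a) t),
         iso_onto rho (Gamma (ext_ideal h a))
       & iso_onto rhobar (Gammabar (ext_ideal h a))])
  /\
  (* (b) *)
  (forall (M : lmodType R), noetherian_module M ->
   forall (T : lmodType S) (b : S -> M -> T)
     (T0 : lmodType S) (b0 : S -> M -> T0) (rho : {linear T0 -> T})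
     (T1 : lmodType S) (b1 : S -> M -> T1) (rhobar : {linear T1 -> T}),
     is_tensor h (@TT R M) b ->
     is_tensor h (Gamma a) b0 -> is_rho (Gamma a) b0 b rho ->
     is_tensor h (Gammabar a) b1 -> is_rho (Gammabar a) b1 b rhobar ->
     [/\ (forall x : M, Gamma a x <-> Gammabar a x),
         (forall t : T, Gamma (ext_ideal h a) t <-> Gammabar (ext_ideal h a) t),
         iso_onto rho (Gamma (ext_ideal h a))
       & iso_onto rhobar (Gammabar (ext_ideal h a))])
  /\
  (* (c) *)
  (mittag_leffler h ->
   forall (M : lmodType R)
     (T : lmodType S) (b : S -> M -> T)
     (T0 : lmodType S) (b0 : S -> M -> T0) (rho : {linear T0 -> T}),
     is_tensor h (@TT R M) b ->
     is_tensor h (Gamma a) b0 -> is_rho (Gamma a) b0 b rho ->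
     iso_onto rho (Gamma (ext_ideal h a))).
Proof.
move=> fl ha; split; [|split].
- move=> [n [n1 [k [g Hg]]]] M T b T0 b0 rho T1 b1 rhobar.
  have Hga : forall i, a (g i).
    by move=> i; apply: (pow_sub ha n1); apply/Hg; apply: gen1; exists i.
  exact: (master fl Hga (fgK Hg)).
- move=> M hN T b T0 b0 rho T1 b1 rhobar.
  have [k [g [Hga Hc]]] := noeth_approx_all hN ha.
  exact: (master fl Hga (noethK Hc)).
- by move=> ml M T b T0 b0 rho; apply: partC.
Qed.
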